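(* Let $A, C, D$ be binary random variables, with $A$ taking values $a,\overline{a}$, $C$ taking values $c,\overline{c}$, $D$ taking values $d,\overline{d}$, and let $Y$ be a real random variable with finite expectation. Suppose the joint distribution factorizes as \[ p(A,C,D,Y)=p(D)\,p(C\mid D)\,p(A\mid C)\,p(Y\mid A,C). \] Assume that $C$ and $D$ are dependent, and that every event $\{A=x, C=y, D=z\}$ has positive probability. If $E[Y\mid A,D]$ and $E[A\mid D]$ are both nondecreasing or both nonincreasing in $D$, then $RD_{obs}\ge RD_{true}$. If $E[Y\mid A,D]$ and $E[A\mid D]$ are one nondecreasing and the other nonincreasing in $D$, then $RD_{obs}\le RD_{true}$.
   Context: $RD_{true}=E[Y|a,c]p(c)+E[Y|a,\overline{c}]p(\overline{c})-E[Y|\overline{a},c]p(c)-E[Y|\overline{a},\overline{c}]p(\overline{c})$; $RD_{obs}=E[Y|a,d]p(d)+E[Y|a,\overline{d}]p(\overline{d})-E[Y|\overline{a},d]p(d)-E[Y|\overline{a},\overline{d}]p(\overline{d})$. $E[Y\mid A,D]$ is nondecreasing in $D$ if $E[Y\mid a,d]\ge E[Y\mid a,\overline{d}]$ and $E[Y\mid \overline{a},d]\ge E[Y\mid \overline{a},\overline{d}]$, nonincreasing if both are reversed. With $a=1,\overline{a}=0$, $E[A\mid D]=p(a\mid D)$ is nondecreasing in $D$ if $p(a\mid d)\ge p(a\mid\overline{d})$ and nonincreasing if $p(a\mid d)\le p(a\mid\overline{d})$. *)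

(* Defs.v *)
From HB Require Import structures.
From mathcomp Require Import all_boot all_order all_algebra.
From mathcomp Require Import all_classical all_reals.
From mathcomp Require Import ereal topology normedtype sequences measure
  lebesgue_measure lebesgue_integral probability.

Set Implicit Arguments.
Unset Strict Implicit.
Unset Printing Implicit Defensive.
Import Order.TTheory GRing.Theory Num.Theory.
Local Open Scope classical_set_scope.
Local Open Scope ring_scope.

Section Defs.
Context {d : measure_display} {T : measurableType d} {R : realType}.
Variable P : probability T R.

(* A binary random variable is represented by the event where it takes
   its "first" value (a, c, d); [ev S b] is the event {X = x} with
   x = first value when b = true and x = second value (bar) when b = false. *)
Definition ev (S : set T) (b : bool) : set T := if b then S else ~` S.

Definition pr (E : set T) : R := fine (P E).

Definition cpr (E F : set T) : R := pr (E `&` F) / pr F.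

Definition cexp (Y : T -> R) (F : set T) : R :=
  fine (\int[P]_(x in F) (Y x)%:E) / pr F.

Definition RD_true (A C : set T) (Y : T -> R) : R :=
  cexp Y (ev A true `&` ev C true) * pr (ev C true)
  + cexp Y (ev A true `&` ev C false) * pr (ev C false)
  - cexp Y (ev A false `&` ev C true) * pr (ev C true)
  - cexp Y (ev A false `&` ev C false) * pr (ev C false).

Definition RD_obs (A D : set T) (Y : T -> R) : R :=
  cexp Y (ev A true `&` ev D true) * pr (ev D true)
  + cexp Y (ev A true `&` ev D false) * pr (ev D false)
  - cexp Y (ev A false `&` ev D true) * pr (ev D true)
  - cexp Y (ev A false `&` ev D false) * pr (ev D false).

Definition EY_AD_nondecr (A D : set T) (Y : T -> R) : Prop :=
  cexp Y (ev A true `&` ev D true) >= cexp Y (ev A true `&` ev D false) /\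
  cexp Y (ev A false `&` ev D true) >= cexp Y (ev A false `&` ev D false).
Definition EY_AD_nonincr (A D : set T) (Y : T -> R) : Prop :=
  cexp Y (ev A true `&` ev D true) <= cexp Y (ev A true `&` ev D false) /\
  cexp Y (ev A false `&` ev D true) <= cexp Y (ev A false `&` ev D false).

(* E[A | D] = p(a | D) (with a = 1, abar = 0) nondecreasing / nonincreasing *)
Definition EA_D_nondecr (A D : set T) : Prop :=
  cpr (ev A true) (ev D true) >= cpr (ev A true) (ev D false).
Definition EA_D_nonincr (A D : set T) : Prop :=
  cpr (ev A true) (ev D true) <= cpr (ev A true) (ev D false).

Definition factorizes (A C D : set T) (Y : T -> R) : Prop :=
  forall (x y z : bool) (B : set R), measurable B ->
    pr (ev A x `&` ev C y `&` ev D z `&` Y @^-1` B) =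
    pr (ev D z) * cpr (ev C y) (ev D z) * cpr (ev A x) (ev C y)
      * cpr (Y @^-1` B) (ev A x `&` ev C y).

Definition dependent (C D : set T) : Prop :=
  P (C `&` D) <> (P C * P D)%E.

End Defs.

(* Main.v *)
Require Import Defs.
From mathcomp Require Import all_boot all_order all_algebra.
From mathcomp Require Import all_classical all_reals.
From mathcomp Require Import ereal topology normedtype sequences measure
  lebesgue_measure lebesgue_integral probability measurable_realfun numfun.
From mathcomp Require Import ring lra.
Import Order.TTheory GRing.Theory Num.Theory.
Local Open Scope classical_set_scope.
Local Open Scope ring_scope.

Section Core.
Variable R : realFieldType.
Variables (q : bool -> bool -> R) (s : bool -> R) (m : bool -> bool -> R).
Definition sx x y := if x then s y else 1 - s y.
Definition pp x y z := q y z * sx x y.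
Definition EE x z := (m x true * pp x true z + m x false * pp x false z) /
                      (pp x true z + pp x false z).
Definition Pz z := q true z + q false z.
Definition Py y := q y true + q y false.
Definition pA z := (pp true true z + pp true false z) / Pz z.
Definition obs := EE true true * Pz true + EE true false * Pz false
   - EE false true * Pz true - EE false false * Pz false.
Definition tru := m true true * Py true + m true false * Py false
   - m false true * Py true - m false false * Py false.

Lemma sgn_aux {u v : R} : 0 < v -> 0 <= u * v -> 0 <= u.
Proof. move=> v0 h; rewrite -(pmulr_lge0 _ v0) //. Qed.

Lemma signlem {X1 X0 S D c1 c2 c3 K1 K0 : R} : D != 0 -> 0 < c1 -> 0 < c2 -> 0 < c3 ->
  0 <= K1 -> 0 <= K0 ->
  (0 <= X1 * D * c1 /\ 0 <= X0 * D * c2 /\ 0 <= S * D * c3 \/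
   X1 * D * c1 <= 0 /\ X0 * D * c2 <= 0 /\ S * D * c3 <= 0) ->
  0 <= S * (X1 * K1 + X0 * K0).
Proof.
move=> D0 c10 c20 c30 K10 K00.
have DD : 0 < D * D by rewrite -expr2 exprn_even_gt0.
have key : forall X, ((0 <= X * D * c1 /\ 0 <= S * D * c3) \/ (X * D * c1 <= 0 /\ S * D * c3 <= 0))
   -> 0 <= S * X.
  move=> X [[h1 h2]|[h1 h2]].
  - have h1' := sgn_aux c10 h1; have h2' := sgn_aux c30 h2.
    apply: (sgn_aux DD); have -> : S * X * (D * D) = (X * D) * (S * D) by ring.
    exact: mulr_ge0.
  - have h1' : 0 <= - (X * D) by apply: (sgn_aux c10); rewrite mulNr oppr_ge0.
    have h2' : 0 <= - (S * D) by apply: (sgn_aux c30); rewrite mulNr oppr_ge0.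
    apply: (sgn_aux DD); have -> : S * X * (D * D) = (- (X * D)) * (- (S * D)) by ring.
    exact: mulr_ge0.
have key2 : forall X, ((0 <= X * D * c2 /\ 0 <= S * D * c3) \/ (X * D * c2 <= 0 /\ S * D * c3 <= 0))
   -> 0 <= S * X.
  move=> X h; apply: key; have e : X * D * c2 = (X * D * c1) * (c2 / c1).
    by field; apply/lt0r_neq0.
  have cc : 0 < c2 / c1 by apply: divr_gt0.
  case: h => [[h1 h2]|[h1 h2]]; [left|right]; split => //.
  - by apply: (sgn_aux cc); rewrite -e.
  - have : 0 <= - (X * D * c1) by apply: (sgn_aux cc); rewrite mulNr -e oppr_ge0.
    by rewrite oppr_ge0.
move=> h.
have a1 : 0 <= S * X1 by apply: key; case: h => [[? [? ?]]|[? [? ?]]]; [left|right].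
have a0 : 0 <= S * X0 by apply: key2; case: h => [[? [? ?]]|[? [? ?]]]; [left|right].
rewrite mulrDr !mulrA; apply: addr_ge0; exact: mulr_ge0.
Qed.

Lemma core
  (hq : forall y z, 0 < q y z) (hs0 : forall y, 0 < s y) (hs1 : forall y, s y < 1)
  (hD : q true true * q false false - q true false * q false true != 0) :
  (((EE true true >= EE true false /\ EE false true >= EE false false) /\ pA true >= pA false) \/
   ((EE true true <= EE true false /\ EE false true <= EE false false) /\ pA true <= pA false) ->
   obs >= tru) /\
  (((EE true true >= EE true false /\ EE false true >= EE false false) /\ pA true <= pA false) \/
   ((EE true true <= EE true false /\ EE false true <= EE false false) /\ pA true >= pA false) ->
   obs <= tru).
Proof.
set D := q true true * q false false - q true false * q false true.
have qtt := hq true true; have qtf := hq true false; have qft := hq false true; have qff := hq false false.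
have st := hs0 true; have sf := hs0 false; have st1 := hs1 true; have sf1 := hs1 false.
pose a z := q true z * s true + q false z * s false.
pose b z := q true z * (1 - s true) + q false z * (1 - s false).
have ha z : 0 < a z by rewrite /a; have := hq true z; have := hq false z; nra.
have hb z : 0 < b z by rewrite /b; have := hq true z; have := hq false z; nra.
have hP z : 0 < Pz z by rewrite /Pz; have := hq true z; have := hq false z; lra.
have F1 : EE true true - EE true false =
   (m true true - m true false) * D * (s true * s false / (a true * a false)).
  by rewrite /EE /pp /sx /D /a; field; repeat (apply/andP; split); apply/lt0r_neq0; nra.
have F2 : EE false true - EE false false =
   (m false true - m false false) * D * ((1 - s true) * (1 - s false) / (b true * b false)).
  by rewrite /EE /pp /sx /D /b; field; repeat (apply/andP; split); apply/lt0r_neq0; nra.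
have F3 : pA true - pA false = (s true - s false) * D / (Pz true * Pz false).
  by rewrite /pA /pp /sx /D /Pz; field; repeat (apply/andP; split); apply/lt0r_neq0; nra.
pose K1 := q true true * q false true / a true + q true false * q false false / a false.
pose K0 := q true true * q false true / b true + q true false * q false false / b false.
have F4 : obs - tru = (s true - s false) *
   ((m true true - m true false) * K1 + (m false true - m false false) * K0).
  rewrite /obs /tru /EE /pp /sx /Pz /Py /K1 /K0 /a /b; field.
  repeat (apply/andP; split); apply/lt0r_neq0; nra.
have c1p : 0 < s true * s false / (a true * a false).
  by apply: divr_gt0; [apply: mulr_gt0|apply: mulr_gt0].
have c2p : 0 < (1 - s true) * (1 - s false) / (b true * b false).
  by apply: divr_gt0; apply: mulr_gt0 => //; rewrite subr_gt0.
have c3p : 0 < 1 / (Pz true * Pz false).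
  by apply: divr_gt0 => //; apply: mulr_gt0.
have K1p : 0 <= K1.
  by rewrite /K1; apply: addr_ge0; apply: divr_ge0; rewrite ?mulr_ge0 ?ltW.
have K0p : 0 <= K0.
  by rewrite /K0; apply: addr_ge0; apply: divr_ge0; rewrite ?mulr_ge0 ?ltW.
have F3' : pA true - pA false = (s true - s false) * D * (1 / (Pz true * Pz false)).
  by rewrite F3 mulrA mulr1.
split.
- move=> h; rewrite -subr_ge0 F4; apply: (signlem hD c1p c2p c3p K1p K0p).
  rewrite -F1 -F2 -F3' !subr_ge0 !subr_le0.
  by case: h => [[[? ?] ?]|[[? ?] ?]]; [left|right].
- move=> h; rewrite -subr_le0 F4.
  rewrite -oppr_ge0 -mulNr; apply: (signlem hD c1p c2p c3p K1p K0p).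
  rewrite -F1 -F2 !mulNr -F3' oppr_ge0 oppr_le0 !subr_ge0 !subr_le0.
  by case: h => [[[? ?] ?]|[[? ?] ?]]; [left|right].
Qed.
End Core.
Arguments sx {R}. Arguments pp {R}. Arguments EE {R}. Arguments Pz {R}.
Arguments Py {R}. Arguments pA {R}. Arguments obs {R}. Arguments tru {R}.
Arguments core {R q s m}.

Lemma int_restr_push {d} {T : measurableType d} {R : realType} {P : {measure set T -> \bar R}}
  {Y : T -> R} (mY : measurable_fun setT Y) {E : set T} (mE : measurable E)
  {g : R -> \bar R} (mg : measurable_fun setT g) (g0 : forall y, (0 <= g y)%E) :
  (\int[P]_(x in E) g (Y x) = \int[pushforward (mrestr P mE) Y]_(y in setT) g y)%E.
Proof.
rewrite (ge0_integral_pushforward mY (mrestr P mE) measurableT mg (fun y _ => g0 y)).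
rewrite preimage_setT.
have mgY : measurable_fun setT (g \o Y) by exact: measurableT_comp.
have mCE : measurable (~` E) by exact: measurableC.
rewrite -(setUv E) integral_setU //; last 2 first.
- by rewrite setUv.
- by rewrite /disj_set setICr.
rewrite (null_set_integral (mu := mrestr P mE) mCE) //; first last.
- rewrite /mrestr /=; transitivity (P set0); last exact: measure0.
  by congr (P _); apply/seteqP; split => t /= // [] ? ?.
- exact: measurable_funTS.
rewrite adde0; apply: eq_measure_integral => A mA AE.
by change (P A = P (A `&` E)); rewrite setIidl.
Qed.

Lemma ge0_scale {d} {T : measurableType d} {R : realType} {P : {measure set T -> \bar R}}
  {Y : T -> R} (mY : measurable_fun setT Y) {E F : set T} (mE : measurable E) (mF : measurable F)
  (k : {nonneg R})
  (h : forall B, measurable B -> P (Y @^-1` B `&` E) = (k%:num%:E * P (Y @^-1` B `&` F))%E)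
  {g : R -> \bar R} (mg : measurable_fun setT g) (g0 : forall y, (0 <= g y)%E) :
  (\int[P]_(x in E) g (Y x) = k%:num%:E * \int[P]_(x in F) g (Y x))%E.
Proof.
rewrite (int_restr_push mY mE mg g0) (int_restr_push mY mF mg g0).
rewrite -(ge0_integral_mscale (pushforward (mrestr P mF) Y) measurableT k) //.
apply: eq_measure_integral => B mB _.
exact: h.
Unshelve. all: try exact: mY.
Qed.

Lemma scale_int {d} {T : measurableType d} {R : realType} {P : {measure set T -> \bar R}}
  {Y : T -> R} (mY : measurable_fun setT Y) (iY : P.-integrable setT (fun t => (Y t)%:E))
  {E F : set T} (mE : measurable E) (mF : measurable F)
  (k : {nonneg R})
  (h : forall B, measurable B -> P (Y @^-1` B `&` E) = (k%:num%:E * P (Y @^-1` B `&` F))%E) :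
  (\int[P]_(x in E) (Y x)%:E = k%:num%:E * \int[P]_(x in F) (Y x)%:E)%E.
Proof.
have mEF : measurable_fun [set: R] (@EFin R) by exact: EFin_measurable.
have mgp : measurable_fun setT (fun r : R => maxe r%:E 0%E).
  have -> : (fun r : R => maxe r%:E 0%E) = (funepos (@EFin R)) by apply/funext => r; rewrite funeposE.
  exact (measurable_funepos mEF).
have mgn : measurable_fun setT (fun r : R => maxe (- r%:E)%E 0%E).
  have -> : (fun r : R => maxe (- r%:E)%E 0%E) = (funeneg (@EFin R)) by apply/funext => r; rewrite funenegE.
  exact (measurable_funeneg mEF).
have gp0 : forall y : R, (0 <= maxe y%:E 0)%E by move=> y; rewrite le_max lexx orbT.
have gn0 : forall y : R, (0 <= maxe (- y%:E)%E 0)%E by move=> y; rewrite le_max lexx orbT.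
have ep := ge0_scale mY mE mF k h mgp gp0.
have en := ge0_scale mY mE mF k h mgn gn0.
have eP : funepos (fun t => (Y t)%:E) = (fun t => maxe (Y t)%:E 0) by apply/funext => r; rewrite funeposE.
have eN : funeneg (fun t => (Y t)%:E) = (fun t => maxe (- (Y t)%:E)%E 0) by apply/funext => r; rewrite funenegE.
rewrite [LHS]integralE [in RHS]integralE eP eN ep en.
have iF : P.-integrable F (fun t => (Y t)%:E).
  by apply: (integrableS measurableT mF) => //.
have iN := integrable_funeneg mF iF.
rewrite eN in iN.
rewrite [RHS]muleBr //; apply: fin_num_adde_defl; rewrite fin_numN.
exact: (integrable_fin_num mF iN).
Qed.

Lemma prE {d} {T : measurableType d} {R : realType} {P : probability T R} {X : set T}
  (mX : measurable X) : ((pr P X)%:E = P X)%E.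
Proof. by rewrite /pr fineK // fin_num_measure. Qed.

Lemma sp_pr {d} {T : measurableType d} {R : realType} {P : probability T R} {X S : set T}
  (mX : measurable X) (mS : measurable S) :
  pr P X = pr P (X `&` S) + pr P (X `&` ~` S).
Proof.
have m1 : measurable (X `&` S) by exact: measurableI.
have m2 : measurable (X `&` ~` S) by apply: measurableI => //; exact: measurableC.
apply: EFin_inj; rewrite EFinD !prE // -measureU //.
  by rewrite -setIUr setUv setIT.
by rewrite setIACA setICr setI0.
Qed.

Lemma sp_int {d} {T : measurableType d} {R : realType} {P : probability T R} {Y : T -> R}
  (mY : measurable_fun setT Y) (iY : P.-integrable setT (fun t => (Y t)%:E)) {X S : set T}
  (mX : measurable X) (mS : measurable S) :
  fine (\int[P]_(t in X) (Y t)%:E)%E =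
  fine (\int[P]_(t in X `&` S) (Y t)%:E)%E + fine (\int[P]_(t in X `&` ~` S) (Y t)%:E)%E.
Proof.
have m1 : measurable (X `&` S) by exact: measurableI.
have m2 : measurable (X `&` ~` S) by apply: measurableI => //; exact: measurableC.
have fi : forall Z, measurable Z -> (\int[P]_(t in Z) (Y t)%:E)%E \is a fin_num.
  move=> Z mZ; apply: (integrable_fin_num mZ).
  by apply: (integrableS measurableT mZ) => //.
rewrite -fineD ?fi //.
rewrite -integral_setU //.
- by rewrite -setIUr setUv setIT.
- by apply: measurable_funTS; exact/measurable_EFinP.
- by rewrite /disj_set setIACA setICr setI0.
Qed.

Theorem corollary3 (d : measure_display) (T : measurableType d) (R : realType)
  (P : probability T R) (A C D : set T) (Y : T -> R)
  (mA : measurable A) (mC : measurable C) (mD : measurable D)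
  (mY : measurable_fun setT Y)
  (iY : P.-integrable setT (fun t => (Y t)%:E))
  (hfact : factorizes P A C D Y)
  (hdep : dependent P C D)
  (hpos : forall x y z : bool, (0 < P (ev A x `&` ev C y `&` ev D z))%E) :
  ((EY_AD_nondecr P A D Y /\ EA_D_nondecr P A D) \/
   (EY_AD_nonincr P A D Y /\ EA_D_nonincr P A D) ->
     RD_obs P A D Y >= RD_true P A C Y) /\
  ((EY_AD_nondecr P A D Y /\ EA_D_nonincr P A D) \/
   (EY_AD_nonincr P A D Y /\ EA_D_nondecr P A D) ->
     RD_obs P A D Y <= RD_true P A C Y).
Proof.
have mev : forall (S : set T) b, measurable S -> measurable (ev S b).
  by move=> S [] mS; rewrite /ev //; exact: measurableC.
pose E x y z := ev A x `&` ev C y `&` ev D z.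
have mE x y z : measurable (E x y z).
  by apply: measurableI; [apply: measurableI|]; apply: mev.
pose p x y z := pr P (E x y z).
pose J x y z := fine (\int[P]_(t in E x y z) (Y t)%:E)%E.
have pgt0 x y z : 0 < p x y z.
  rewrite /p /pr; apply: fine_gt0; rewrite hpos /=.
  by rewrite ltey_eq fin_num_measure.
have mI (S1 S2 : set T) b1 b2 : measurable S1 -> measurable S2 -> measurable (ev S1 b1 `&` ev S2 b2).
  by move=> ? ?; apply: measurableI; apply: mev.
have mCf : measurable (~` C) by exact: measurableC.
have mAf : measurable (~` A) by exact: measurableC.
have F_AD x z : pr P (ev A x `&` ev D z) = p x true z + p x false z.
  by rewrite (sp_pr (mI A D x z mA mD) mC); congr (pr P _ + pr P _); rewrite setIAC.
have I_AD x z : fine (\int[P]_(t in ev A x `&` ev D z) (Y t)%:E)%E = J x true z + J x false z.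
  by rewrite (sp_int mY iY (mI A D x z mA mD) mC); congr (fine _ + fine _); rewrite setIAC.
have F_AC x y : pr P (ev A x `&` ev C y) = p x y true + p x y false.
  by rewrite (sp_pr (mI A C x y mA mC) mD).
have I_AC x y : fine (\int[P]_(t in ev A x `&` ev C y) (Y t)%:E)%E = J x y true + J x y false.
  by rewrite (sp_int mY iY (mI A C x y mA mC) mD).
have F_D z : pr P (ev D z) = (p true true z + p true false z) + (p false true z + p false false z).
  rewrite (sp_pr (mev D z mD) mA) -F_AD -F_AD; congr (pr P _ + pr P _); rewrite setIC //.
have F_C y : pr P (ev C y) = (p true y true + p true y false) + (p false y true + p false y false).
  rewrite (sp_pr (mev C y mC) mA) -F_AC -F_AC; congr (pr P _ + pr P _); rewrite setIC //.
have F_CD y z : pr P (ev C y `&` ev D z) = p true y z + p false y z.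
  by rewrite (sp_pr (mI C D y z mC mD) mA); congr (pr P _ + pr P _); rewrite setIC setIA.
have F_T : pr P (ev C true) + pr P (ev C false) = 1.
  have := sp_pr (P := P) measurableT mC; rewrite !setTI => <-.
  by rewrite /pr probability_setT.
have pAC x y : 0 < pr P (ev A x `&` ev C y) by rewrite F_AC addr_gt0.
have pDz z : 0 < pr P (ev D z) by rewrite F_D !addr_gt0.
have pCy y : 0 < pr P (ev C y) by rewrite F_C !addr_gt0.
have CI0 x y z : pr P (ev D z) * cpr P (ev C y) (ev D z) * cpr P (ev A x) (ev C y) = p x y z.
  have h := hfact x y z setT measurableT.
  rewrite preimage_setT setIT /cpr setTI divff ?mulr1 in h; last exact: lt0r_neq0.
  by rewrite /p /E h.
have CI x y z : p x y z = (p true y z + p false y z) * (p x y true + p x y false) / pr P (ev C y).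
  rewrite -CI0 /cpr F_CD F_AC; field.
  by apply/andP; split; apply: lt0r_neq0.
have finI (Z : set T) : measurable Z -> (\int[P]_(t in Z) (Y t)%:E)%E \is a fin_num.
  move=> mZ; apply: (integrable_fin_num mZ).
  by apply: (integrableS measurableT mZ) => //.
have SC x y z : J x y z = p x y z / pr P (ev A x `&` ev C y) * (J x y true + J x y false).
  have k0 : 0 <= p x y z / pr P (ev A x `&` ev C y).
    by apply: divr_ge0; apply: ltW.
  have h' : forall B, measurable B -> P (Y @^-1` B `&` E x y z) =
      ((NngNum k0)%:num%:E * P (Y @^-1` B `&` (ev A x `&` ev C y)))%E.
    move=> B mB.
    have mB' : measurable (Y @^-1` B) by rewrite -[X in measurable X]setTI; exact: mY.
    rewrite -!prE; last 2 first.
    - by apply: measurableI => //; exact: mI.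
    - by apply: measurableI => //; exact: mE.
    rewrite -EFinM; congr EFin => /=.
    have := hfact x y z B mB; rewrite CI0 /cpr => h.
    rewrite setIC /p /E h; rewrite -/(E x y z) -/(p x y z); set u := pr P (Y @^-1` B `&` _); set v := pr P (ev A x `&` ev C y); ring.
  have := scale_int mY iY (mE x y z) (mI A C x y mA mC) (NngNum k0) h'.
  rewrite /J -I_AC => ->.
  rewrite -[X in fine (_ * X)%E](fineK (finI _ (mI A C x y mA mC))) -EFinM //.
pose qq y z := p true y z + p false y z.
pose ss y := (p true y true + p true y false) / pr P (ev C y).
pose mm x y := (J x y true + J x y false) / (p x y true + p x y false).
have PP x y z : p x y z = pp qq ss x y z.
  rewrite /pp /sx /qq /ss; case: x.
    by rewrite [LHS]CI mulrA.
  rewrite [LHS]CI F_C; field.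
  by apply: lt0r_neq0; rewrite !addr_gt0.
have JJ x y z : J x y z = mm x y * p x y z.
  rewrite SC F_AC /mm; field; apply: lt0r_neq0; exact: addr_gt0.
have eE x z : cexp P Y (ev A x `&` ev D z) = EE qq ss mm x z.
  by rewrite /cexp I_AD F_AD !JJ !PP.
have eDz z : pr P (ev D z) = Pz qq z.
  by rewrite F_D /Pz /qq; ring.
have eAC x y : cexp P Y (ev A x `&` ev C y) = mm x y.
  by rewrite /cexp I_AC F_AC.
have eCy y : pr P (ev C y) = Py qq y.
  by rewrite F_C /Py /qq; ring.
have eAD z : cpr P (ev A true) (ev D z) = pA qq ss z.
  by rewrite /cpr F_AD eDz /pA !PP.
have hq y z : 0 < qq y z by rewrite addr_gt0.
have hs0 y : 0 < ss y by rewrite divr_gt0 ?addr_gt0.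
have hs1 y : ss y < 1.
  rewrite /ss ltr_pdivrMr // mul1r F_C.
  have := pgt0 false y true; have := pgt0 false y false; lra.
have hD : qq true true * qq false false - qq true false * qq false true != 0.
  apply/eqP => h0; apply: hdep.
  rewrite -[C]/(ev C true) -[D]/(ev D true) -!prE; last 3 first.
  - exact: mev.
  - exact: mev.
  - exact: mI.
  rewrite -EFinM; congr EFin.
  rewrite F_CD eCy eDz -/(qq true true).
  have e : qq true true - Py qq true * Pz qq true =
     (qq true true * qq false false - qq true false * qq false true)
     + qq true true * (1 - (Py qq true + Py qq false)).
    by rewrite /Py /Pz; ring.
  rewrite -eCy -eCy F_T subrr mulr0 addr0 h0 in e.
  by apply/eqP; rewrite -subr_eq0 -eCy e.
rewrite /RD_obs /RD_true /EY_AD_nondecr /EY_AD_nonincr /EA_D_nondecr /EA_D_nonincr.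
rewrite !eE !eAD !eDz !eAC !eCy.
exact: (core hq hs0 hs1 hD).
Qed.
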